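(* Let $G$ be a complete edge-colored graph. The following are equivalent: (i) $G$ is the graph representation of a symbolic ultrametric; (ii) $G$ does not contain a rainbow triangle and every monochromatic subgraph of $G$ is the simple permutation graph (for some labeling) of a separable permutation. Moreover, if $G$ is the graph representation of a symbolic ultrametric, then for every induced subgraph $H$ of $G$, every monochromatic subgraph of $H$ is the simple permutation graph of a separable permutation.
   Context: A complete edge-colored graph $G=(V,E_1,\dots,E_k)$ is a complete graph on finite $V$ with edges partitioned into nonempty color classes $E_i$; its monochromatic subgraphs are $G_{|i}=(V,E_i)$; induced subgraphs keep colors. A rainbow triangle is a set of three vertices whose three edges have pairwise distinct colors. A labeling is a bijection $\ell:V\to\{1,\dots,|V|\}$. A graph $(V,E)$ with labeling $\ell$ is a simple permutation graph of a permutation $\pi$ of $\{1,\dots,|V|\}$ if for all $u,v$ with $\ell(u)>\ell(v)$: $\{u,v\}\in E$ iff $\pi^{-1}(\ell(u))<\pi^{-1}(\ell(v))$. A permutation is separable if it contains neither of the patterns $2413$ and $3142$ (equivalently, it can be built from the one-element permutation by direct and skew sums). For a nonempty finite set $X$, a surjective map $\delta:X\times X\to\{1,\dots,k\}$ is a symbolic ultrametric if (U1) $\delta(x,y)=\delta(y,x)$; (U2) $|\{\delta(x,y),\delta(x,z),\delta(y,z)\}|\le2$ for all $x,y,z$; (U3) there is no 4-element subset $\{x,y,u,v\}$ with $\delta(x,y)=\delta(y,u)=\delta(u,v)\ne\delta(v,y)=\delta(x,v)=\delta(x,u)$. Its graph representation is the complete graph on $X$ with edge $\{x,y\}$ colored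 $\delta(x,y)$. *)

(* Defs.v *)
From mathcomp Require Import all_boot all_order all_fingroup.
Set Implicit Arguments. Unset Strict Implicit. Unset Printing Implicit Defensive.

(* The colour of the edge {x,y} (x != y) is
   c x y; values of c on the diagonal are irrelevant. *)
Definition complete_ecg (V : finType) (k : nat) (c : V -> V -> 'I_k) : Prop :=
  (forall x y : V, x != y -> c x y = c y x) /\
  (forall i : 'I_k, exists x y : V, x != y /\ c x y = i).

Definition has_rainbow_triangle (V : finType) (k : nat) (c : V -> V -> 'I_k) : Prop :=
  exists x y z : V, uniq [:: x; y; z] /\ #|[set c x y; c x z; c y z]| = 3.

Definition mono (V : finType) (k : nat) (c : V -> V -> 'I_k) (i : 'I_k) : rel V :=
  fun u v => (u != v) && (c u v == i).

Definition induced (V : finType) (k : nat) (c : V -> V -> 'I_k) (W : {set V})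
  : {x : V | x \in W} -> {x : V | x \in W} -> 'I_k :=
  fun u v => c (val u) (val v).

(* Pattern containment for a permutation p of 'I_n in one-line notation
   p 0, p 1, ..., p (n-1); the pattern s is given in one-line notation
   (0-based). *)
Definition contains_pattern (n : nat) (p : 'S_n) (s : seq nat) : Prop :=
  exists f : 'I_(size s) -> 'I_n,
    (forall a b : 'I_(size s), a < b -> f a < f b) /\
    (forall a b : 'I_(size s), (p (f a) < p (f b)) = (nth 0 s a < nth 0 s b)).

(* Separable: avoids 2413 and 3142 (here written 0-based). *)
Definition separable (n : nat) (p : 'S_n) : Prop :=
  ~ contains_pattern p [:: 1; 3; 0; 2] /\ ~ contains_pattern p [:: 2; 0; 3; 1].

Definition simple_perm_graph (T : finType) (adj : rel T)
    (l : T -> 'I_#|T|) (p : 'S_#|T|) : Prop :=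
  bijective l /\
  forall u v : T, l v < l u -> (adj u v <-> ((p^-1)%g (l u) < (p^-1)%g (l v))).

Definition is_sep_perm_graph (T : finType) (adj : rel T) : Prop :=
  exists (l : T -> 'I_#|T|) (p : 'S_#|T|), separable p /\ simple_perm_graph adj l p.

Definition symbolic_ultrametric (X : finType) (k : nat) (d : X -> X -> 'I_k) : Prop :=
  0 < #|X| /\
  (forall i : 'I_k, exists x y : X, d x y = i) /\
  (forall x y : X, d x y = d y x) /\
  (forall x y z : X, #|[set d x y; d x z; d y z]| <= 2) /\
  ~ (exists x y u v : X, uniq [:: x; y; u; v] /\
       d x y = d y u /\ d y u = d u v /\ d u v != d v y /\
       d v y = d x v /\ d x v = d x u).

Definition graph_rep (X : finType) (k : nat) (d c : X -> X -> 'I_k) : Prop :=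
  forall x y : X, x != y -> c x y = d x y.
Arguments induced {V k} c W _ _.

(* Main.v *)
Require Import Defs.
From mathcomp Require Import all_boot all_order all_fingroup zify.
Set Implicit Arguments. Unset Strict Implicit. Unset Printing Implicit Defensive.

Definition P4free (T : finType) (e : rel T) :=
  forall a b c d : T, uniq [:: a; b; c; d] -> e a b -> e b c -> e c d ->
    ~~ e a c -> ~~ e a d -> ~~ e b d -> False.

Lemma uniq4E (T : eqType) (a b c d : T) :
  uniq [:: a; b; c; d] = [&& a != b, a != c, a != d, b != c, b != d & c != d].
Proof.
rewrite /= !inE !negb_or andbT.
by case: (a != b); case: (a != c); case: (a != d); case: (b != c); case: (b != d); case: (c != d).
Qed.

Definition hsplit (T : finType) (e : rel T) (S A B : {set T}) :=
  [/\ A :|: B = S, [disjoint A & B], A != set0, B != set0 &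
     (forall a b, a \in A -> b \in B -> e a b) \/
     (forall a b, a \in A -> b \in B -> ~~ e a b)].

Definition ecomp (T : finType) (e : rel T) : rel T := fun x y => (x != y) && ~~ e x y.

Section Step.
Variable T : finType.
Variable e : rel T.
Hypothesis esym : forall x y, e x y = e y x.
Hypothesis eP4 : P4free e.

Lemma step (A B : {set T}) v : [disjoint A & B] -> A != set0 -> B != set0 ->
  v \notin A :|: B -> (forall a b, a \in A -> b \in B -> ~~ e a b) ->
  exists A2 B2, hsplit e (v |: (A :|: B)) A2 B2.
Proof.
move=> dAB nA nB vAB noE.
have vA : v \in A = false by apply/negP => h; move: vAB; rewrite inE h.
have vB : v \in B = false by apply/negP => h; move: vAB; rewrite inE h orbT.
have [/forall_inP hA | /forall_inPn [a0 a0A ea0]] := boolP [forall a in A, ~~ e v a].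
  exists A, (v |: B); split => //.
  - by rewrite setUCA.
  - by rewrite -setI_eq0; apply/eqP/setP => x; rewrite !inE;
      case: (eqVneq x v) => [->|]; rewrite ?vA ?andbF //= => _; apply/negP => /andP [xA xB];
      move: (disjointFr dAB xA); rewrite xB.
  - by apply/set0Pn; exists v; rewrite !inE eqxx.
  - right => a b aA /setU1P [->|bB]; first by rewrite esym hA.
    exact: noE.
have [/forall_inP hB | /forall_inPn [b0 b0B eb0]] := boolP [forall b in B, ~~ e v b].
  exists (v |: A), B; split => //.
  - by rewrite setUA.
  - by rewrite -setI_eq0; apply/eqP/setP => x; rewrite !inE;
      case: (eqVneq x v) => [->|]; rewrite ?vB ?andbF //= => _; apply/negP => /andP [xA xB];
      move: (disjointFr dAB xA); rewrite xB.
  - by apply/set0Pn; exists v; rewrite !inE eqxx.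
  - right => a b /setU1P [->|aA] bB; first by rewrite hB.
    exact: noE.
rewrite negbK in ea0; rewrite negbK in eb0.
pose N := [set x in A :|: B | e v x].
pose X := (A :|: B) :\: N.
have [X0|nX] := eqVneq X set0.
  exists [set v], (A :|: B); split => //.
  - by rewrite disjoints1.
  - by apply/set0Pn; exists v; rewrite inE.
  - by apply/set0Pn; exists a0; rewrite inE a0A.
  - left => a b /set1P -> bAB.
    have : b \notin X by rewrite X0 inE.
    by rewrite !inE; move: bAB; rewrite inE => -> /=; rewrite andbT negbK.
exists X, (v |: N); split => //.
- apply/setP => x; rewrite !inE.
  by case: (x == v); case: (x \in A); case: (x \in B); case: (e v x).
- rewrite -setI_eq0; apply/eqP/setP => x; rewrite !inE.
  case: (eqVneq x v) => [->|_]; first by rewrite vA vB.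
  by case: (x \in A); case: (x \in B); case: (e v x).
- by apply/set0Pn; exists v; rewrite !inE eqxx.
right => x y; rewrite !inE => /andP [xN xAB] /orP [/eqP ->|/andP [yAB evy]].
  by rewrite esym; move: xN; rewrite xAB /=.
have nexv : ~~ e v x by move: xN; rewrite xAB.
apply/negP => exy.
have xy : x != y by apply/eqP => E; move: nexv; rewrite E evy.
have xv : x != v by apply/eqP => E; move: xAB; rewrite E vA vB.
have yv : y != v by apply/eqP => E; move: yAB; rewrite E vA vB.
case/orP: xAB => xX; case/orP: yAB => yY.
- apply: (eP4 (a:=x) (b:=y) (c:=v) (d:=b0)) => //.
  + rewrite uniq4E xy xv yv /=.
    have -> : x != b0 by apply/eqP => E; move: (disjointFr dAB xX); rewrite E b0B.
    have -> : y != b0 by apply/eqP => E; move: (disjointFr dAB yY); rewrite E b0B.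
    by apply/eqP => E; move: vB; rewrite E b0B.
  + by rewrite esym.
  + by rewrite esym.
  + exact: noE.
  + exact: noE.
- by move: (noE _ _ xX yY); rewrite exy.
- by move: (noE _ _ yY xX); rewrite esym exy.
- apply: (eP4 (a:=x) (b:=y) (c:=v) (d:=a0)) => //.
  + rewrite uniq4E xy xv yv /=.
    have -> : x != a0 by apply/eqP => E; move: (disjointFr dAB a0A); rewrite -E xX.
    have -> : y != a0 by apply/eqP => E; move: (disjointFr dAB a0A); rewrite -E yY.
    by apply/eqP => E; move: vA; rewrite E a0A.
  + by rewrite esym.
  + by rewrite esym.
  + by rewrite esym; exact: noE.
  + by rewrite esym; exact: noE.
Qed.
End Step.
Lemma ecomp_sym (T : finType) (e : rel T) : (forall x y, e x y = e y x) ->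
  forall x y, ecomp e x y = ecomp e y x.
Proof. by move=> esym x y; rewrite /ecomp eq_sym esym. Qed.

Lemma ecomp_P4 (T : finType) (e : rel T) : (forall x y, e x y = e y x) ->
  P4free e -> P4free (ecomp e).
Proof.
move=> esym eP4 a b c d u hab hbc hcd nac nad nbd.
move: (u); rewrite uniq4E => /and5P [ab ac ad bc /andP [bd cd]].
move: hab hbc hcd nac nad nbd; rewrite /ecomp ab ac ad bc bd cd /= !negbK => hab hbc hcd nac nad nbd.
apply: (@eP4 c a d b) => //.
- by rewrite uniq4E eq_sym ac cd eq_sym bc ad ab eq_sym bd.
- by rewrite esym.
- by rewrite esym.
- by rewrite esym.
Qed.

Lemma idx_cat_l (T : eqType) (s t : seq T) x : x \in s -> index x (s ++ t) = index x s.
Proof. by move=> xs; rewrite index_cat xs. Qed.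
Lemma idx_cat_r (T : eqType) (s t : seq T) x : x \notin s -> index x (s ++ t) = size s + index x t.
Proof. by move=> xs; rewrite index_cat (negbTE xs). Qed.

Section Cograph.
Variable T : finType.
Variable e : rel T.
Hypothesis esym : forall x y, e x y = e y x.
Hypothesis eP4 : P4free e.

Lemma split_ex (S : {set T}) : 1 < #|S| -> exists A B, hsplit e S A B.
Proof.
have [n] := ubnP #|S|; elim: n S => // n IH S Sn S2.
have [v vS] : exists v, v \in S by apply/card_gt0P; lia.
set S' := S :\ v.
have cS : #|S| = #|S'|.+1 by rewrite (cardsD1 v S) vS.
have SE : S = v |: S' by rewrite setD1K.
have vS' : v \notin S' by rewrite !inE eqxx.
have [S1|S2'] := leqP #|S'| 1.
  have : #|S'| = 1 by lia.
  move/eqP/cards1P => [w Sw].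
  have vw : v != w by apply/eqP => E; move: vS'; rewrite Sw E inE eqxx.
  exists [set v], [set w]; split.
  - by rewrite SE Sw.
  - by rewrite disjoints1 inE.
  - by apply/set0Pn; exists v; rewrite inE.
  - by apply/set0Pn; exists w; rewrite inE.
  - by case: (boolP (e v w)) => h; [left|right] => a b /set1P -> /set1P ->.
have [A [B [U dAB nA nB [allE|noE]]]] := IH S' ltac:(lia) S2'.
  have vAB : v \notin A :|: B by rewrite U.
  have noEc : forall a b, a \in A -> b \in B -> ~~ ecomp e a b.
    by move=> a b aA bB; rewrite /ecomp allE // andbF.
  have [A2 [B2 [U2 d2 n2 m2 H2]]] := step (ecomp_sym esym) (ecomp_P4 esym eP4) dAB nA nB vAB noEc.
  exists A2, B2; split => //; first by rewrite SE -U.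
  case: H2 => H; [right|left] => a b aA bB.
  - by case/andP: (H a b aA bB).
  - have ab : a != b by apply/eqP => E; move: (disjointFr d2 aA); rewrite E bB.
    by move: (H a b aA bB); rewrite /ecomp ab /= negbK.
have vAB : v \notin A :|: B by rewrite U.
have [A2 [B2 [U2 d2 n2 m2 H2]]] := step esym eP4 dAB nA nB vAB noE.
by exists A2, B2; split => //; rewrite SE -U.
Qed.

Definition realizes (S : {set T}) (s1 s2 : seq T) :=
  [/\ uniq s1, uniq s2, s1 =i S, s2 =i S &
   forall u v, u \in S -> v \in S -> u != v ->
     e u v = ((index u s1 < index v s1) != (index u s2 < index v s2))].

Lemma cat_uniq_disj (s t : seq T) (A B : {set T}) : uniq s -> uniq t -> s =i A -> t =i B ->
  [disjoint A & B] -> uniq (s ++ t).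
Proof.
move=> us ut ms mt dAB; rewrite cat_uniq us ut andbT /=.
by apply/hasPn => x; rewrite /= mt ms => xB; rewrite (disjointFl dAB xB).
Qed.

Lemma combine (A B : {set T}) a1 a2 b1 b2 (sw : bool) :
  [disjoint A & B] -> realizes A a1 a2 -> realizes B b1 b2 ->
  (forall a b, a \in A -> b \in B -> e a b = sw) ->
  realizes (A :|: B) (a1 ++ b1) (if sw then b2 ++ a2 else a2 ++ b2).
Proof.
move=> dAB [ua1 ua2 ma1 ma2 ha] [ub1 ub2 mb1 mb2 hb] hab.
have dBA : [disjoint B & A] by rewrite disjoint_sym.
split.
- exact: cat_uniq_disj dAB.
- by case: sw {hab}; [exact: cat_uniq_disj dBA | exact: cat_uniq_disj dAB].
- by move=> x; rewrite mem_cat ma1 mb1 inE.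
- by case: sw {hab} => x; rewrite mem_cat ma2 mb2 inE // orbC.
have nA x : x \in B -> x \notin A by move=> xB; rewrite (disjointFl dAB xB).
have nB x : x \in A -> x \notin B by move=> xA; rewrite (disjointFr dAB xA).
have ia1 x : x \in A -> index x a1 < size a1 by move=> xA; rewrite index_mem ma1.
have ia2 x : x \in A -> index x a2 < size a2 by move=> xA; rewrite index_mem ma2.
have ib1 x : x \in B -> index x b1 < size b1 by move=> xA; rewrite index_mem mb1.
have ib2 x : x \in B -> index x b2 < size b2 by move=> xA; rewrite index_mem mb2.
move=> u v; rewrite !inE => /orP [uA|uB] /orP [vA|vB] uv.
- rewrite !idx_cat_l ?ma1 // ha //.
  case: sw {hab}; last by rewrite !idx_cat_l ?ma2.
  by rewrite !idx_cat_r ?mb2 ?nB // ltn_add2l.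
- rewrite hab // (@idx_cat_l _ _ _ u) ?ma1 // (@idx_cat_r _ _ _ v) ?ma1 ?nA //.
  have := ia1 u uA; have := ia2 u uA; have := ib2 v vB.
  case: sw {hab}.
  + rewrite (@idx_cat_l _ _ _ v) ?mb2 // (@idx_cat_r _ _ _ u) ?mb2 ?nB // => h1 h2 h3.
    have -> : (index u a1 < size a1 + index v b1) = true by lia.
    have -> : (size b2 + index u a2 < index v b2) = false by lia.
    by [].
  + rewrite (@idx_cat_l _ _ _ u) ?ma2 // (@idx_cat_r _ _ _ v) ?ma2 ?nA // => h1 h2 h3.
    have -> : (index u a1 < size a1 + index v b1) = true by lia.
    have -> : (index u a2 < size a2 + index v b2) = true by lia.
    by [].
- rewrite esym hab // (@idx_cat_l _ _ _ v) ?ma1 // (@idx_cat_r _ _ _ u) ?ma1 ?nA //.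
  have := ia1 v vA; have := ia2 v vA; have := ib2 u uB.
  case: sw {hab}.
  + rewrite (@idx_cat_l _ _ _ u) ?mb2 // (@idx_cat_r _ _ _ v) ?mb2 ?nB // => h1 h2 h3.
    have -> : (size a1 + index u b1 < index v a1) = false by lia.
    have -> : (index u b2 < size b2 + index v a2) = true by lia.
    by [].
  + rewrite (@idx_cat_l _ _ _ v) ?ma2 // (@idx_cat_r _ _ _ u) ?ma2 ?nA // => h1 h2 h3.
    have -> : (size a1 + index u b1 < index v a1) = false by lia.
    have -> : (size a2 + index u b2 < index v a2) = false by lia.
    by [].
- rewrite !idx_cat_r ?ma1 ?nA // ltn_add2l hb //.
  case: sw {hab}; first by rewrite !idx_cat_l ?mb2.
  by rewrite !idx_cat_r ?ma2 ?nA // ltn_add2l.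
Qed.

Lemma realize (S : {set T}) : exists s1 s2, realizes S s1 s2.
Proof.
have [n] := ubnP #|S|; elim: n S => // n IH S Sn.
have [S1|S2] := leqP #|S| 1.
  exists (enum S), (enum S); split; try exact: enum_uniq; try exact: mem_enum.
  move=> u v uS vS; move/card_le1_eqP: S1 => h.
  by rewrite (h u v uS vS) eqxx.
have [A [B [U dAB nA nB H]]] := split_ex S2.
have cAB : #|S| = #|A| + #|B| by rewrite -U -cardsUI (disjoint_setI0 dAB) cards0 addn0.
move: nA nB; rewrite -!card_gt0 => nA nB.
have [a1 [a2 rA]] := IH A ltac:(lia).
have [b1 [b2 rB]] := IH B ltac:(lia).
rewrite -U.
case: H => H.
- exists (a1 ++ b1), (b2 ++ a2).
  apply: (combine (sw := true)) => // a b aA bB; exact: H.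
- exists (a1 ++ b1), (a2 ++ b2).
  apply: (combine (sw := false)) => // a b aA bB; exact: negbTE (H a b aA bB).
Qed.
End Cograph.
Lemma cases4 : forall La Lb Lc Ld Pa Pb Pc Pd : nat,
    (La < Lb /\ Pb < Pa \/ Lb < La /\ Pa < Pb) ->
    (Lb < Lc /\ Pc < Pb \/ Lc < Lb /\ Pb < Pc) ->
    (Lc < Ld /\ Pd < Pc \/ Ld < Lc /\ Pc < Pd) ->
    (La < Lc /\ Pa < Pc \/ Lc < La /\ Pc < Pa) ->
    (La < Ld /\ Pa < Pd \/ Ld < La /\ Pd < Pa) ->
    (Lb < Ld /\ Pb < Pd \/ Ld < Lb /\ Pd < Pb) ->
    (Pa < Pc /\ Pc < Pb /\ Pb < Pd /\ Lb < La /\ La < Ld /\ Ld < Lc) \/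
    (Pd < Pb /\ Pb < Pc /\ Pc < Pa /\ Lc < Ld /\ Ld < La /\ La < Lb) \/
    (Pb < Pa /\ Pa < Pd /\ Pd < Pc /\ La < Lc /\ Lc < Lb /\ Lb < Ld) \/
    (Pc < Pd /\ Pd < Pa /\ Pa < Pb /\ Ld < Lb /\ Lb < Lc /\ Lc < La).
Proof.
  move=> La Lb Lc Ld Pa Pb Pc Pd.
  case=> [[? ?]|[? ?]]; case=> [[? ?]|[? ?]]; case=> [[? ?]|[? ?]];
  case=> [[? ?]|[? ?]]; case=> [[? ?]|[? ?]]; case=> [[? ?]|[? ?]];
  first [ (left; repeat split; assumption) | (right; left; repeat split; assumption)
        | (right; right; left; repeat split; assumption)
        | (right; right; right; repeat split; assumption) | (exfalso; lia) ].
Qed.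

Section PermGraph.
Variable T : finType.
Variable adj : rel T.
Hypothesis asym : forall x y, adj x y = adj y x.

Lemma sep_of_P4free l p : simple_perm_graph adj l p -> P4free adj -> separable p.
Proof.
move=> [[li lK liK] hl] hP4.
have key : forall (s : seq nat) (f : 'I_(size s) -> 'I_#|T|),
    (forall a b : 'I_(size s), a < b -> f a < f b) ->
    (forall a b : 'I_(size s), (p (f a) < p (f b)) = (nth 0 s a < nth 0 s b)) ->
    forall a b : 'I_(size s), a < b ->
      adj (li (p (f a))) (li (p (f b))) = (nth 0 s b < nth 0 s a).
  move=> s f finc hf a b ab; rewrite -hf.
  case: (ltngtP (p (f b)) (p (f a))) => h.
  - have := hl (li (p (f a))) (li (p (f b))); rewrite !liK !permK => /(_ h) [_ ->] //.
    exact: finc.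
  - rewrite asym; have := hl (li (p (f b))) (li (p (f a))); rewrite !liK !permK => /(_ h) [H _].
    apply/negbTE/negP => /H; rewrite ltnNge (ltnW (finc _ _ ab)) //.
  - move/val_inj/perm_inj: h => h; move: (finc _ _ ab); rewrite h ltnn //.
have ne : forall (s : seq nat) (f : 'I_(size s) -> 'I_#|T|),
    (forall a b : 'I_(size s), a < b -> f a < f b) ->
    forall a b : 'I_(size s), a < b -> li (p (f a)) != li (p (f b)).
  move=> s f finc a b ab; apply/eqP => E.
  have := congr1 l E; rewrite !liK => /perm_inj E'.
  by move: (finc a b ab); rewrite E' ltnn.
pose o0 : 'I_4 := @Ordinal 4 0 isT.
pose o1 : 'I_4 := @Ordinal 4 1 isT.
pose o2 : 'I_4 := @Ordinal 4 2 isT.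
pose o3 : 'I_4 := @Ordinal 4 3 isT.
split.
- move=> [f [finc hf]].
  have K := key _ f finc hf; have N := ne _ f finc.
  apply: (hP4 (li (p (f o0))) (li (p (f o2))) (li (p (f o1))) (li (p (f o3)))).
  + rewrite uniq4E (N o0 o2) // (N o0 o1) // (N o0 o3) // eq_sym (N o1 o2) //.
    by rewrite (N o2 o3) // (N o1 o3).
  + by rewrite K.
  + by rewrite asym K.
  + by rewrite K.
  + by rewrite K.
  + by rewrite K.
  + by rewrite K.
- move=> [f [finc hf]].
  have K := key _ f finc hf; have N := ne _ f finc.
  apply: (hP4 (li (p (f o1))) (li (p (f o0))) (li (p (f o3))) (li (p (f o2)))).
  + rewrite uniq4E eq_sym (N o0 o1) // (N o1 o3) // (N o1 o2) // (N o0 o3) //.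
    by rewrite (N o0 o2) // eq_sym (N o2 o3).
  + by rewrite asym K.
  + by rewrite K.
  + by rewrite asym K.
  + by rewrite K.
  + by rewrite K.
  + by rewrite K.
Qed.

Lemma cograph_perm : P4free adj -> is_sep_perm_graph adj.
Proof.
move=> aP4.
have [s1 [s2 [u1 u2 m1 m2 H]]] := realize asym aP4 [set: T].
have sz1 : size s1 = #|T| by rewrite -(card_uniqP u1); apply: eq_card => x; rewrite m1 inE.
have sz2 : size s2 = #|T| by rewrite -(card_uniqP u2); apply: eq_card => x; rewrite m2 inE.
have in1 : forall x, x \in s1 by move=> x; rewrite m1 inE.
have in2 : forall x, x \in s2 by move=> x; rewrite m2 inE.
have lt1 : forall u, index u s1 < #|T| by move=> u; rewrite -sz1 index_mem.
pose l := fun u => Ordinal (lt1 u).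
have lt2 : forall i : 'I_#|T|, index (nth (enum_default i) s1 i) s2 < #|T|.
  by move=> i; move: (in2 (nth (enum_default i) s1 i)); rewrite -index_mem sz2.
pose g := fun i => Ordinal (lt2 i).
have ginj : injective g.
  move=> i j /(congr1 val) /= E.
  have ilt : i < size s1 by rewrite sz1.
  have jlt : j < size s1 by rewrite sz1.
  rewrite (set_nth_default (enum_default i) (enum_default j) jlt) in E.
  have E2 := index_inj (enum_default i) (in2 _) (in2 _) E.
  apply/val_inj/eqP; rewrite -(nth_uniq (enum_default i) ilt jlt u1).
  by apply/eqP.
have sim : simple_perm_graph adj l ((perm ginj)^-1)%g.
  split.
  - apply: inj_card_bij; last by rewrite card_ord.
    move=> u v /(congr1 val) /= E; exact: (index_inj u (in1 _) (in1 _) E).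
  - move=> u v /= lt; rewrite invgK !permE /= !nth_index //.
    have uv : u != v by apply/eqP => E; move: lt; rewrite E ltnn.
    rewrite H ?inE // ltnNge (ltnW lt) /=.
    by case: (index u s2 < index v s2).
exists l, ((perm ginj)^-1)%g; split => //.
exact: sep_of_P4free sim aP4.
Qed.

Local Notation Lf l x := (nat_of_ord (l x)).
Local Notation Pf l p x := (nat_of_ord ((p^-1)%g (l x))).

Lemma mkpat (l : T -> 'I_#|T|) (p : {perm 'I_#|T|}) (s0 s1 s2 s3 : nat) (w0 w1 w2 w3 : T) :
  Pf l p w0 < Pf l p w1 -> Pf l p w1 < Pf l p w2 -> Pf l p w2 < Pf l p w3 ->
  (forall i j : 'I_4, (Lf l (nth w0 [:: w0; w1; w2; w3] i) < Lf l (nth w0 [:: w0; w1; w2; w3] j))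
      = (nth 0 [:: s0; s1; s2; s3] i < nth 0 [:: s0; s1; s2; s3] j)) ->
  contains_pattern p [:: s0; s1; s2; s3].
Proof.
move=> h1 h2 h3 hL.
exists (fun i => (p^-1)%g (l (nth w0 [:: w0; w1; w2; w3] i))); split.
- move=> [[|[|[|[|i]]]] Hi] [[|[|[|[|j]]]] Hj] //= ij.
  + exact: ltn_trans h1 h2.
  + exact: ltn_trans h1 (ltn_trans h2 h3).
  + exact: ltn_trans h2 h3.
- by move=> i j; rewrite !permKV; exact: hL.
Qed.

Lemma P4free_of_sim l p : simple_perm_graph adj l p -> separable p -> P4free adj.
Proof.
move=> [[li lK liK] hl] [n1 n2] a b c d u hab hbc hcd nac nad nbd.
have linj : injective l := can_inj lK.
have Lne : forall x y, x != y -> Lf l x != Lf l y.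
  by move=> x y xy; apply: contra xy => /eqP /val_inj /linj ->.
have Pne : forall x y, x != y -> Pf l p x != Pf l p y.
  by move=> x y xy; apply: contra xy => /eqP /val_inj /perm_inj /linj ->.
have edge : forall x y, x != y -> adj x y = ((Lf l x < Lf l y) != (Pf l p x < Pf l p y)).
  move=> x y xy.
  case: (ltngtP (Lf l x) (Lf l y)) => h.
  - have [H1 H2] := hl y x h; rewrite asym.
    case: (ltngtP (Pf l p x) (Pf l p y)) => h'.
    + by apply/negP => /H1; rewrite ltnNge (ltnW h').
    + exact: H2.
    + by move: (Pne x y xy); rewrite h' eqxx.
  - have [H1 H2] := hl x y h.
    case: (ltngtP (Pf l p x) (Pf l p y)) => h'.
    + exact: H2.
    + by apply/negP => /H1; rewrite ltnNge (ltnW h').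
    + by move: (Pne x y xy); rewrite h' eqxx.
  - by move: (Lne x y xy); rewrite h eqxx.
have eT : forall x y, x != y -> adj x y ->
    (Lf l x < Lf l y /\ Pf l p y < Pf l p x) \/ (Lf l y < Lf l x /\ Pf l p x < Pf l p y).
  move=> x y xy; rewrite edge //.
  case: (ltngtP (Lf l x) (Lf l y)) => hL; case: (ltngtP (Pf l p x) (Pf l p y)) => hP //= _.
  all: try by [left|right].
  all: try by move: (Lne x y xy); rewrite hL eqxx.
  all: try by move: (Pne x y xy); rewrite hP eqxx.
have eF : forall x y, x != y -> ~~ adj x y ->
    (Lf l x < Lf l y /\ Pf l p x < Pf l p y) \/ (Lf l y < Lf l x /\ Pf l p y < Pf l p x).
  move=> x y xy; rewrite edge //.
  case: (ltngtP (Lf l x) (Lf l y)) => hL; case: (ltngtP (Pf l p x) (Pf l p y)) => hP //= _.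
  all: try by [left|right].
  all: try by move: (Lne x y xy); rewrite hL eqxx.
  all: try by move: (Pne x y xy); rewrite hP eqxx.
move: (u); rewrite uniq4E => /and5P [ab ac ad bc /andP [bd cd]].
have := cases4 (eT _ _ ab hab) (eT _ _ bc hbc) (eT _ _ cd hcd)
   (eF _ _ ac nac) (eF _ _ ad nad) (eF _ _ bd nbd).
case=> [[h1 [h2 [h3 [h4 [h5 h6]]]]]|[[h1 [h2 [h3 [h4 [h5 h6]]]]]|[[h1 [h2 [h3 [h4 [h5 h6]]]]]|[h1 [h2 [h3 [h4 [h5 h6]]]]]]]].
- apply: n1; apply: (mkpat (w0:=a) (w1:=c) (w2:=b) (w3:=d) h1 h2 h3).
  move=> [[|[|[|[|i]]]] Hi] [[|[|[|[|j]]]] Hj] //; cbn [nth nat_of_ord]; clear -h4 h5 h6; lia.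
- apply: n1; apply: (mkpat (w0:=d) (w1:=b) (w2:=c) (w3:=a) h1 h2 h3).
  move=> [[|[|[|[|i]]]] Hi] [[|[|[|[|j]]]] Hj] //; cbn [nth nat_of_ord]; clear -h4 h5 h6; lia.
- apply: n2; apply: (mkpat (w0:=b) (w1:=a) (w2:=d) (w3:=c) h1 h2 h3).
  move=> [[|[|[|[|i]]]] Hi] [[|[|[|[|j]]]] Hj] //; cbn [nth nat_of_ord]; clear -h4 h5 h6; lia.
- apply: n2; apply: (mkpat (w0:=c) (w1:=d) (w2:=a) (w3:=b) h1 h2 h3).
  move=> [[|[|[|[|i]]]] Hi] [[|[|[|[|j]]]] Hj] //; cbn [nth nat_of_ord]; clear -h4 h5 h6; lia.
Qed.
End PermGraph.

Lemma set3E (k : nat) (x y z : 'I_k) : [set x; y; z] = x |: (y |: [set z]).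
Proof. by rewrite setUA. Qed.

Lemma card3 (k : nat) (x y z : 'I_k) : x != y -> x != z -> y != z -> #|[set x; y; z]| = 3.
Proof.
move=> xy xz yz.
by rewrite set3E !cardsU1 !inE cards1 (negbTE xy) (negbTE xz) (negbTE yz).
Qed.

Lemma card3le (k : nat) (x y z : 'I_k) : #|[set x; y; z]| <= 3.
Proof.
by rewrite set3E !cardsU1 cards1; case: (x \notin _); case: (y \notin _).
Qed.

Lemma card3le2 (k : nat) (x y z : 'I_k) : x = y \/ x = z \/ y = z -> #|[set x; y; z]| <= 2.
Proof.
case=> [->|[->|->]]; rewrite set3E !cardsU1 !inE cards1 ?eqxx ?orbT //=;
by case: (_ == _).
Qed.

Section Main.
Variables (V : finType) (k : nat) (c : V -> V -> 'I_k).
Hypothesis csym : forall x y : V, x != y -> c x y = c y x.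

Lemma mono_sym i : forall x y, mono c i x y = mono c i y x.
Proof.
move=> x y; rewrite /mono eq_sym.
by case: (eqVneq y x) => // h; rewrite csym // eq_sym.
Qed.

Lemma ultra_P4 (d : V -> V -> 'I_k) : symbolic_ultrametric d -> graph_rep d c ->
  forall i, P4free (mono c i).
Proof.
move=> [_ [_ [dsym [dU2 dU3]]]] rep i a b c' d' u hab hbc hcd nac nad nbd.
move: (u); rewrite uniq4E => /and5P [ab ac ad bc /andP [bd cd]].
move: hab hbc hcd nac nad nbd; rewrite /mono ab ac ad bc bd cd /= !rep //.
move=> /eqP hab /eqP hbc /eqP hcd nac nad nbd.
have E1 : d a d' = d a c'.
  apply/eqP; apply: contraT => ne.
  have := dU2 a c' d'; rewrite card3 //; first by rewrite eq_sym.
  by rewrite hcd.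
  by rewrite hcd.
have E2 : d a d' = d b d'.
  apply/eqP; apply: contraT => ne.
  have := dU2 a b d'; rewrite card3 // hab; first by rewrite eq_sym.
  by rewrite eq_sym.
apply: dU3; exists a, b, c', d'; split => //.
rewrite hab hbc hcd (dsym d' b) -E2 E1; split => //; split => //; split => //.
by rewrite -E1 eq_sym E2.
Qed.
End Main.

Unset Implicit Arguments.
Theorem corollary6p6 (V : finType) (k : nat) (c : V -> V -> 'I_k) :
  0 < k -> complete_ecg c ->
  ((exists d : V -> V -> 'I_k, symbolic_ultrametric d /\ graph_rep d c) <->
   (~ has_rainbow_triangle c /\ forall i : 'I_k, is_sep_perm_graph (mono c i))) /\
  ((exists d : V -> V -> 'I_k, symbolic_ultrametric d /\ graph_rep d c) ->
   forall (W : {set V}) (i : 'I_k),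
     (exists u v : {x : V | x \in W}, u != v /\ induced c W u v = i) ->
     is_sep_perm_graph (mono (induced c W) i)).
Proof.
move=> k0 [csym csurj].
split; first split.
- move=> [d [du rep]]; split.
  + move=> [x [y [z [u3 h3]]]].
    move: (u3); rewrite /= !inE negb_or andbT => /andP [/andP [xy xz] yz].
    move: h3; rewrite !rep //.
    case: du => [_ [_ [_ [dU2 _]]]].
    by move=> h3; move: (dU2 x y z); rewrite h3.
  + move=> i; apply: cograph_perm; first exact: mono_sym.
    exact: ultra_P4 du rep i.
- move=> [nrb hsep]; exists c; split => //.
  split; [|split; [|split; [|split]]].
  + have [x [y _]] := csurj (Ordinal k0).
    by apply/card_gt0P; exists x.
  + by move=> i; have [x [y [_ h]]] := csurj i; exists x, y.
  + by move=> x y; case: (eqVneq x y) => [->|h] //; exact: csym.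
  + move=> x y z.
    have [u3|nu] := boolP (uniq [:: x; y; z]).
      have h := card3le (c x y) (c x z) (c y z).
      have [h3|ne] := eqVneq #|[set c x y; c x z; c y z]| 3.
        by case: nrb; exists x, y, z.
      lia.
    apply: card3le2.
    case: (eqVneq x y) => [<-|xy]; first by right; right.
    case: (eqVneq x z) => [<-|xz]; first by right; left; rewrite csym.
    have yz : y = z.
      by apply/eqP; apply: contraNT nu => yz; rewrite /= !inE negb_or xy xz yz.
    by rewrite yz; left.
  + move=> [x [y [u' [v [un [h1 [h2 [h3 [h4 h5]]]]]]]]].
    have [l [p [sp sim]]] := hsep (c x y).
    have P4 := P4free_of_sim (mono_sym csym (c x y)) sim sp.
    move: (un); rewrite uniq4E => /and5P [xy xu xv yu /andP [yv uv]].
    apply: (P4 x y u' v un); rewrite /mono ?xy ?xu ?xv ?yu ?yv ?uv //=.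
    * by rewrite h1.
    * by rewrite h1 h2.
    * by rewrite -h5 -h4 h1 h2 eq_sym.
    * by rewrite -h4 h1 h2 eq_sym.
    * by rewrite csym // h1 h2 eq_sym.
- move=> [d [du rep]] W i _.
  have Em : forall a b : {x : V | x \in W}, mono (induced c W) i a b = mono c i (val a) (val b).
    by move=> a b; rewrite /mono /induced val_eqE.
  apply: cograph_perm.
  + by move=> a b; rewrite !Em mono_sym.
  + move=> a b c' d' u; rewrite !Em => h1 h2 h3 h4 h5 h6.
    have hu : uniq [:: val a; val b; val c'; val d'].
      by change (uniq (map val [:: a; b; c'; d'])); rewrite map_inj_uniq //; exact: val_inj.
    exact: (ultra_P4 du rep hu h1 h2 h3 h4 h5 h6).
Qed.
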